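(* Let $\mathbb{F}$ be a field, $d\geq 3$ an integer and $V$ a vector space over $\mathbb{F}$ of dimension $d+1$. Let $E^*_0,\dots,E^*_d$ be a system of mutually orthogonal idempotents in $\mathrm{End}(V)$, and let $A\in\mathrm{End}(V)$ satisfy $E^*_iAE^*_j=0$ if $|i-j|>1$ and $E^*_iAE^*_j\neq 0$ if $|i-j|=1$. Assume $A$ is multiplicity-free and bipartite, with primitive idempotents $E_0,\dots,E_d$ and corresponding eigenvalues $\theta_0,\dots,\theta_d$. Let $\theta^*_0,\dots,\theta^*_d\in\mathbb{F}$ and $A^*=\sum_i\theta^*_iE^*_i$. Assume $E_0$ is normalizing and that in $\Delta$ the vertex $E_0$ is adjacent to $E_1$ and to no other vertex. Then, with $a^*_0=\operatorname{tr}(E_0A^* )$, $$a^*_0=\frac{\theta_1\theta^*_0-\theta_0\theta^*_1}{\theta_1-\theta_0}=\frac{\theta_1\theta^*_d-\theta_0\theta^*_{d-1}}{\theta_1-\theta_0}.$$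
   Context: A system of mutually orthogonal idempotents is a sequence $E^*_0,\dots,E^*_d$ of linear maps $V\to V$ with $E^*_iE^*_j=\delta_{ij}E^*_i$ and $\operatorname{rank}E^*_i=1$. $A$ is multiplicity-free if it has $d+1$ mutually distinct eigenvalues in $\mathbb{F}$; the primitive idempotent $E_i$ for $\theta_i$ is the projection onto the $\theta_i$-eigenspace along the sum of the other eigenspaces. $A$ is bipartite if $\operatorname{tr}(E^*_iA)=0$ for all $i$. $\Delta$ is the graph whose vertices are $E_0,\dots,E_d$, with $E_i\neq E_j$ adjacent iff $E_iA^*E_j\neq 0$. For a basis $v_0,\dots,v_d$, the matrix $Y$ representing $A$ satisfies $Av_j=\sum_iY_{ij}v_i$. An eigenvalue $\theta$ of $A$ is normalizing if there is a basis $v_0,\dots,v_d$ of $V$ with $v_i\in E^*_iV$ such that every row of the matrix representing $A$ sums to $\theta$; $E_i$ is normalizing if $\theta_i$ is. *)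

(* Defs.v *)
(* V = F^(d+1) as column vectors 'cV[F]_n; End(V) = 'M[F]_n,
   a matrix M acting as v |-> M *m v, so composition of maps is *m. *)
From HB Require Import structures.
From mathcomp Require Import all_boot all_order all_algebra.
Set Implicit Arguments. Unset Strict Implicit. Unset Printing Implicit Defensive.
Import Order.TTheory GRing.Theory Num.Theory.
Local Open Scope ring_scope.

Section Defs.
Variables (F : fieldType) (n : nat).

Definition mutually_orthogonal_idempotents (Es : 'I_n -> 'M[F]_n) : Prop :=
  (forall i j, Es i *m Es j = if i == j then Es i else 0) /\
  (forall i, \rank (Es i) = 1%N).

Definition is_eigenvalue (A : 'M[F]_n) (t : F) : Prop :=
  exists2 v : 'cV[F]_n, v != 0 & A *m v = t *: v.

Definition multiplicity_free_with (A : 'M[F]_n) (theta : 'I_n -> F) : Prop :=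
  injective theta /\ forall i, is_eigenvalue A (theta i).

(* E is the projection onto the theta_i-eigenspace along the sum of the
   other eigenspaces: for any family of eigenvectors w_j (for theta_j),
   E maps \sum_j w_j to w_i. *)
Definition primitive_idempotent (A : 'M[F]_n) (theta : 'I_n -> F) (i : 'I_n)
  (E : 'M[F]_n) : Prop :=
  forall w : 'I_n -> 'cV[F]_n,
    (forall j, A *m w j = theta j *: w j) -> E *m (\sum_j w j) = w i.

Definition bipartite (Es : 'I_n -> 'M[F]_n) (A : 'M[F]_n) : Prop :=
  forall i, \tr (Es i *m A) = 0.

(* theta is normalizing: there is a basis v_0..v_{n-1} (columns of B) with
   v_i in E^*_i V such that every row of the matrix Y representing A
   (A v_j = \sum_i Y_ij v_i, i.e. A B = B Y) sums to theta. *)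
Definition normalizing (Es : 'I_n -> 'M[F]_n) (A : 'M[F]_n) (t : F) : Prop :=
  exists B : 'M[F]_n,
    [/\ B \in unitmx,
        forall i, exists u : 'cV[F]_n, col i B = Es i *m u &
        exists Y : 'M[F]_n, A *m B = B *m Y /\ forall i, \sum_j Y i j = t].

Definition Delta_adj (E : 'I_n -> 'M[F]_n) (Astar : 'M[F]_n) (i j : 'I_n) : Prop :=
  E i <> E j /\ E i *m Astar *m E j <> 0.

End Defs.

(* Main.v *)
Require Import Defs.
From HB Require Import structures.
From mathcomp Require Import all_boot all_order all_algebra.
From mathcomp Require Import ring zify.
Import Order.TTheory GRing.Theory Num.Theory.
Local Open Scope ring_scope.
Set Implicit Arguments. Unset Strict Implicit.

Section H.
Variable F : fieldType.

Lemma outer0 n (u : 'cV[F]_n) (v : 'rV[F]_n) : u *m v = 0 -> v != 0 -> u = 0.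
Proof.
move=> huv hv.
have [b hb]: exists b, v 0 b != 0.
  apply/existsP; apply: contraR hv => /existsPn h; apply/eqP/rowP => j.
  by rewrite mxE; apply/eqP/negPn/h.
apply/colP => a; move/matrixP: huv => /(_ a b); rewrite !mxE big_ord1.
by move/eqP; rewrite mulf_eq0 (negbTE hb) orbF => /eqP ->.
Qed.

Lemma rank1_sig n (M : 'M[F]_n) : \rank M = 1%N ->
  {pq : 'cV[F]_n * 'rV[F]_n | M = pq.1 *m pq.2}.
Proof.
move=> h; have := mulmx_base M; move: (col_base M) (row_base M).
rewrite h => c r <-; by exists (c, r).
Qed.

Lemma sandwich n (p : 'cV[F]_n) (q : 'rV[F]_n) X :
  (p *m q) *m X *m (p *m q) = \tr ((p *m q) *m X) *: (p *m q).
Proof.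
have -> : (p *m q) *m X *m (p *m q) = p *m (q *m X *m p) *m q by rewrite !mulmxA.
have -> : \tr (p *m q *m X) = \tr (q *m X *m p) by rewrite -mulmxA mxtrace_mulC.
rewrite [q *m X *m p]mx11_scalar mul_mx_scalar -scalemxAl mxtrace_scalar.
by [].
Qed.

Lemma mx_eq_basis n (W : 'M[F]_n) (X Y : 'M[F]_n) : W \in unitmx ->
  (forall j, X *m col j W = Y *m col j W) -> X = Y.
Proof.
move=> hW h; have hXY : X *m W = Y *m W.
  have cm : forall j (Z : 'M[F]_n), col j (Z *m W) = Z *m col j W.
    by move=> j Z; rewrite !colE mulmxA.
  apply/matrixP => a b; move: (h b); rewrite -!cm => /colP /(_ a).
  by rewrite !mxE.
by rewrite -[X]mulmx1 -(mulmxV hW) mulmxA hXY -mulmxA mulmxV // mulmx1.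
Qed.

Section EF.
Variables (n : nat) (A : 'M[F]_n) (theta : 'I_n -> F) (E : 'I_n -> 'M[F]_n)
  (w : 'I_n -> 'cV[F]_n).
Hypotheses (hw0 : forall i, w i != 0) (hwA : forall i, A *m w i = theta i *: w i)
  (hE0 : forall i, primitive_idempotent A theta i (E i)).

Let hE i : forall w' : 'I_n -> 'cV[F]_n,
    (forall j, A *m w' j = theta j *: w' j) -> E i *m (\sum_j w' j) = w' i.
Proof. exact: hE0. Qed.

Lemma Ew i j : E i *m w j = if i == j then w j else 0.
Proof.
have := @hE i (fun k => if k == j then w j else 0).
rewrite (bigD1 j) //= eqxx big1 ?addr0; last by move=> k /negbTE ->.
apply=> k; case: eqP => [->|_]; first exact: hwA.
by rewrite mulmx0 scaler0.
Qed.

Definition Wm : 'M[F]_n := \matrix_(a, j) w j a 0.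
Lemma colW j : col j Wm = w j.
Proof. by apply/colP => a; rewrite !mxE. Qed.

Lemma Wm_inj (x : 'cV[F]_n) : Wm *m x = 0 -> x = 0.
Proof.
move=> hx; have hs : Wm *m x = \sum_j x j 0 *: w j.
  apply/colP => a; rewrite !mxE summxE; apply: eq_bigr => j _.
  by rewrite !mxE mulrC.
apply/colP => i; rewrite mxE.
have := @hE i (fun j => x j 0 *: w j); rewrite -hs hx mulmx0 => h.
have /esym/eqP : 0 = x i 0 *: w i by apply: h => j; rewrite -scalemxAr hwA scalerA mulrC -scalerA.
by rewrite scalemx_eq0 (negbTE (hw0 i)) orbF => /eqP.
Qed.

Lemma Wm_unit : Wm \in unitmx.
Proof.
rewrite -unitmx_tr -row_free_unit -kermx_eq0; apply/eqP/row_matrixP => k.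
rewrite row0; have h := mulmx_ker Wm^T.
have : row k (kermx Wm^T) *m Wm^T = 0 by rewrite -row_mul h row0.
move=> /(congr1 trmx); rewrite trmx_mul trmxK trmx0 => /Wm_inj /(congr1 trmx).
by rewrite trmxK trmx0.
Qed.

Lemma E_eq (X Y : 'M[F]_n) : (forall j, X *m w j = Y *m w j) -> X = Y.
Proof. move=> h; apply: (mx_eq_basis Wm_unit) => j; by rewrite colW. Qed.

Lemma EA i : E i *m A = theta i *: E i.
Proof.
apply: E_eq => j; rewrite -mulmxA hwA -scalemxAl -!scalemxAr Ew.
by case: eqP => [->|_]; rewrite ?scaler0.
Qed.

Lemma Esum : \sum_i E i = 1%:M.
Proof.
apply: E_eq => j; rewrite mulmx_suml mul1mx (bigD1 j) //= Ew eqxx big1 ?addr0 //.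
by move=> k /negbTE hk; rewrite Ew hk.
Qed.

Lemma E_rank1 i : E i = w i *m row i (invmx Wm).
Proof.
apply: E_eq => j; rewrite Ew -mulmxA -colW -row_mul.
have -> : invmx Wm *m col j Wm = col j 1%:M by rewrite !colE mulmxA mulVmx ?Wm_unit // mul1mx.
rewrite [row i _]mx11_scalar mul_mx_scalar !mxE colW.
by case: eqP => [->|_]; rewrite ?scale1r ?scale0r.
Qed.

Lemma E_neq i j : i != j -> E i <> E j.
Proof.
move=> hij hE'; have := Ew i i; rewrite hE' Ew eq_sym (negbTE hij) eqxx.
by move=> /esym/eqP; rewrite (negbTE (hw0 i)).
Qed.

Lemma E_neq0 i : E i != 0.
Proof.
apply/eqP=> h; have := Ew i i; rewrite h mul0mx eqxx => /esym/eqP.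
by rewrite (negbTE (hw0 i)).
Qed.

End EF.
Section ES.
Variables (n : nat) (Es : 'I_n -> 'M[F]_n) (A : 'M[F]_n).
Hypothesis hmo : mutually_orthogonal_idempotents Es.

Definition pq i := rank1_sig (hmo.2 i).
Definition pp i := (sval (pq i)).1.
Definition qq i := (sval (pq i)).2.
Lemma Es_pq i : Es i = pp i *m qq i.
Proof. exact: (svalP (pq i)). Qed.

Lemma Es_ne0 i : Es i != 0.
Proof. by apply/eqP => h; have := hmo.2 i; rewrite h mxrank0. Qed.

Lemma qp i j : (qq i *m pp j) 0 0 = (i == j)%:R.
Proof.
have h := hmo.1 i j; rewrite !Es_pq in h.
have e : pp i *m qq i *m (pp j *m qq j) = (qq i *m pp j) 0 0 *: (pp i *m qq j).
  by rewrite mulmxA -(mulmxA (pp i)) {1}[qq i *m pp j]mx11_scalar mul_mx_scalar -scalemxAl.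
rewrite e in h; case: eqP h => [<- | /eqP hij] h.
  have /eqP : ((qq i *m pp i) 0 0 - 1) *: (pp i *m qq i) = 0 by rewrite scalerBl h scale1r subrr.
  rewrite scalemx_eq0 -Es_pq (negbTE (Es_ne0 i)) orbF subr_eq0 => /eqP ->; by [].
move/eqP: h; rewrite scalemx_eq0 => /orP [/eqP -> //|/eqP h].
have : qq j != 0 by apply: contra (Es_ne0 j) => /eqP hq; rewrite Es_pq hq mulmx0.
move=> /(outer0 h) hp; have := Es_ne0 i; by rewrite Es_pq hp mul0mx eqxx.
Qed.

Lemma Essum : \sum_i Es i = 1%:M.
Proof.
pose P : 'M[F]_n := \matrix_(a, i) pp i a 0.
pose Q : 'M[F]_n := \matrix_(i, b) qq i 0 b.
have hQP : Q *m P = 1%:M.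
  apply/matrixP => i j; rewrite !mxE -qp !mxE; apply: eq_bigr => a _; by rewrite !mxE.
have hPQ := mulmx1C hQP.
rewrite -hPQ; apply/matrixP => a b; rewrite !mxE summxE; apply: eq_bigr => i _.
by rewrite Es_pq !mxE big_ord1.
Qed.

Hypothesis hbip : bipartite Es A.

Lemma Es_diag i : Es i *m A *m Es i = 0.
Proof. by rewrite Es_pq sandwich -Es_pq hbip scale0r. Qed.

Lemma AEs j k : (forall i, i != k -> Es i *m A *m Es j = 0) ->
  A *m Es j = Es k *m A *m Es j.
Proof.
move=> h; have -> : A *m Es j = \sum_i Es i *m A *m Es j by rewrite -!mulmx_suml Essum mul1mx.
by rewrite (bigD1 k) //= big1 ?addr0.
Qed.

End ES.
Lemma propag d (Es : 'I_d.+1 -> 'M[F]_d.+1) (A : 'M[F]_d.+1)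
  (hmo : mutually_orthogonal_idempotents Es)
  (hz : forall i j : 'I_d.+1, ((i.+1 < j) || (j.+1 < i))%N -> Es i *m A *m Es j = 0)
  (hnz : forall i j : 'I_d.+1, (i == j.+1 :> nat) -> Es i *m A *m Es j != 0)
  (X : 'M[F]_d.+1) (c : F) :
  X *m A = c *: X -> X *m Es ord0 = 0 -> X = 0.
Proof.
move=> hXA hX0.
have key : forall m, (m <= d)%N -> forall i : 'I_d.+1, (i <= m)%N -> X *m Es i = 0.
  elim => [_ i|m IH hm i him].
    by rewrite leqn0 => /eqP hi; have -> : i = ord0 by apply/val_inj.
  have [him'|him'] := leqP i m; first exact: IH (ltnW hm) _ him'.
  have hi : (i : nat) = m.+1 by apply/eqP; rewrite eqn_leq him.
  pose jm : 'I_d.+1 := inord m.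
  have hjm : (jm : nat) = m by rewrite /jm inordK //; exact: ltnW hm.
  have h1 : X *m A *m Es jm = 0.
    by rewrite hXA -scalemxAl (IH (ltnW hm) jm) ?hjm // scaler0.
  have h2 : X *m A *m Es jm = \sum_i' X *m Es i' *m A *m Es jm.
    by rewrite -!mulmx_suml -mulmx_sumr Essum // mulmx1.
  have h3 : X *m Es i *m A *m Es jm = 0.
    rewrite -h1 h2 (bigD1 i) //= big1 ?addr0 // => i' hi'.
    have [hle|hlt] := leqP i' m; first by rewrite (IH (ltnW hm) i' hle) !mul0mx.
    rewrite -!mulmxA (mulmxA (Es i')) hz ?mulmx0 //; apply/orP; right.
    rewrite hjm ltn_neqAle hlt andbT; apply: contra hi' => /eqP h.
    by apply/eqP/val_inj; rewrite /= hi.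
  have hne := hnz i jm; rewrite hi hjm eqxx in hne; move: (hne erefl) => {}hne.
  rewrite (Es_pq hmo i) in h3 hne *.
  have hr : qq hmo i *m A *m Es jm != 0.
    by apply: contra hne => /eqP h; rewrite -!mulmxA (mulmxA (qq _ _)) h mulmx0.
  have h4 : (X *m pp hmo i) *m (qq hmo i *m A *m Es jm) = 0 by move: h3; rewrite !mulmxA.
  by rewrite mulmxA (outer0 h4 hr) mul0mx.
rewrite -[X]mulmx1 -(Essum hmo) mulmx_sumr big1 // => i _.
exact: key (leqnn d) i (leq_ord i).
Qed.
Lemma scal_cancel n (Z : 'M[F]_n) (c1 c2 : F) : c1 *: Z = c2 *: Z -> Z != 0 -> c1 = c2.
Proof.
move=> h hZ; have /eqP : (c1 - c2) *: Z = 0 by rewrite scalerBl h subrr.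
by rewrite scalemx_eq0 (negbTE hZ) orbF subr_eq0 => /eqP.
Qed.

Lemma side d (hd : (1 <= d)%N) (Es : 'I_d.+1 -> 'M[F]_d.+1) (A : 'M[F]_d.+1)
  (E : 'I_d.+1 -> 'M[F]_d.+1) (theta thetas : 'I_d.+1 -> F) (w : 'I_d.+1 -> 'cV[F]_d.+1)
  (hw0 : forall i, w i != 0) (hwA : forall i, A *m w i = theta i *: w i)
  (hE : forall i, primitive_idempotent A theta i (E i))
  (hinj : injective theta)
  (hmo : mutually_orthogonal_idempotents Es)
  (hz : forall i j : 'I_d.+1, ((i.+1 < j) || (j.+1 < i))%N -> Es i *m A *m Es j = 0)
  (hnz : forall i j : 'I_d.+1, (i == j.+1 :> nat) -> Es i *m A *m Es j != 0)
  (hbip : bipartite Es A) (Astar : 'M[F]_d.+1)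
  (hAs : Astar = \sum_i thetas i *: Es i)
  (hnadj : forall j : 'I_d.+1, j != inord 1 -> ~ Delta_adj E Astar ord0 j) :
  \tr (E ord0 *m Astar) = (theta (inord 1) * thetas ord0 - theta ord0 * thetas (inord 1))
         / (theta (inord 1) - theta ord0).
Proof.
set i1 : 'I_d.+1 := inord 1.
have hi1 : (i1 : nat) = 1%N by rewrite /i1 inordK.
set a := \tr (E ord0 *m Astar).
have TS : forall j, Astar *m Es j = thetas j *: Es j.
  move=> j; rewrite hAs mulmx_suml (bigD1 j) //= -scalemxAl (hmo.1 j j) eqxx.
  rewrite big1 ?addr0 // => k hk; by rewrite -scalemxAl hmo.1 (negbTE hk) scaler0.
have ETE : E ord0 *m Astar *m E ord0 = a *: E ord0.
  by rewrite (E_rank1 hw0 hwA hE ord0) sandwich -(E_rank1 hw0 hwA hE ord0).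
have h01 : ord0 != i1 by apply/eqP => /(congr1 val) h; move: hi1; rewrite -h.
have ET : E ord0 *m Astar = a *: E ord0 + E ord0 *m Astar *m E i1.
  rewrite -{1}[E ord0 *m Astar]mulmx1 -(Esum hw0 hwA hE) mulmx_sumr (bigD1 ord0) //=.
  rewrite (bigD1 i1) 1?eq_sym //= big1 ?addr0 ?ETE // => j /andP [hj0 hj1].
  case: (eqVneq (E ord0 *m Astar *m E j) 0) => // hne; exfalso; apply: (hnadj j hj1); split; last exact/eqP.
  by apply: (E_neq hw0 hwA hE); rewrite eq_sym.
have AS0 : A *m Es ord0 = Es i1 *m A *m Es ord0.
  apply: (AEs hmo) => i hi; have [->|hi0] := eqVneq i ord0; first exact: Es_diag.
  apply: hz; apply/orP; right => /=.
  have : (i : nat) != 1%N by apply: contra hi => /eqP h; apply/eqP/val_inj; exact: (etrans h (esym hi1)).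
  have : (i : nat) != 0%N by apply: contra hi0 => /eqP h; apply/eqP/val_inj; rewrite /= h.
  by case: (i : nat) => [|[|k]].
have EA0 := EA hw0 hwA hE ord0.
have EA1 := EA hw0 hwA hE i1.
have hZ : E ord0 *m Es ord0 != 0.
  apply/eqP => h; have := E_neq0 hw0 hwA hE ord0.
  by rewrite (propag hmo hz hnz EA0 h) eqxx.
set Z := E ord0 *m Es ord0.
have L1 : E ord0 *m Astar *m A *m Es ord0 = (thetas i1 * theta ord0) *: Z.
  rewrite -mulmxA AS0.
  have -> : E ord0 *m Astar *m (Es i1 *m A *m Es ord0) = E ord0 *m (Astar *m Es i1) *m A *m Es ord0 by rewrite !mulmxA.
  rewrite TS -scalemxAr -!scalemxAl.
  have -> : E ord0 *m Es i1 *m A *m Es ord0 = E ord0 *m (A *m Es ord0) by rewrite AS0 !mulmxA.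
  by rewrite mulmxA EA0 -scalemxAl scalerA.
have L2 : E ord0 *m Astar *m A *m Es ord0 =
    (a * theta ord0 + theta i1 * (thetas ord0 - a)) *: Z.
  have hY : E ord0 *m Astar *m E i1 = E ord0 *m Astar - a *: E ord0.
    by rewrite [in RHS]ET addrAC subrr add0r.
  have T2 : E ord0 *m Astar *m E i1 *m A *m Es ord0 = theta i1 *: ((thetas ord0 - a) *: Z).
    rewrite -(mulmxA _ (E i1)) EA1 -scalemxAr -scalemxAl hY mulmxBl -scalemxAl.
    by rewrite -mulmxA TS -scalemxAr scalerBl.
  have T1 : a *: E ord0 *m A *m Es ord0 = (a * theta ord0) *: Z.
    by rewrite -!scalemxAl EA0 -scalemxAl scalerA.
  by rewrite {1}ET !mulmxDl T1 T2 scalerA scalerDl.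
have heq := scal_cancel (etrans (esym L1) L2) hZ.
have hD : theta i1 - theta ord0 != 0.
  by rewrite subr_eq0; apply/eqP => /hinj /eqP; rewrite eq_sym (negbTE h01).
apply: (canRL (mulfK hD)).
have -> : theta ord0 * thetas i1 = a * theta ord0 + theta i1 * (thetas ord0 - a) by rewrite -heq mulrC.
ring.
Qed.
End H.
Theorem lemma7p4 (F : fieldType) (d : nat) (hd : (3 <= d)%N)
  (Es : 'I_d.+1 -> 'M[F]_d.+1) (A : 'M[F]_d.+1)
  (E : 'I_d.+1 -> 'M[F]_d.+1) (theta thetas : 'I_d.+1 -> F) :
  mutually_orthogonal_idempotents Es ->
  (forall i j : 'I_d.+1, ((i.+1 < j) || (j.+1 < i))%N -> Es i *m A *m Es j = 0) ->
  (forall i j : 'I_d.+1, ((i.+1 == j) || (j.+1 == i))%N -> Es i *m A *m Es j != 0) ->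
  multiplicity_free_with A theta ->
  bipartite Es A ->
  (forall i, primitive_idempotent A theta i (E i)) ->
  let Astar := \sum_i thetas i *: Es i in
  normalizing Es A (theta ord0) ->
  Delta_adj E Astar ord0 (inord 1) ->
  (forall j : 'I_d.+1, j != inord 1 -> ~ Delta_adj E Astar ord0 j) ->
  let a0 := \tr (E ord0 *m Astar) in
  a0 = (theta (inord 1) * thetas ord0 - theta ord0 * thetas (inord 1))
         / (theta (inord 1) - theta ord0) /\
  a0 = (theta (inord 1) * thetas ord_max - theta ord0 * thetas (inord d.-1))
         / (theta (inord 1) - theta ord0).
Proof.
move=> hmo hz hnz0 hmf hbip hE Astar _ _ hnadj a0.
have hd1 : (1 <= d)%N by apply: leq_trans hd.
pose w i := s2val (sig2_eqW (hmf.2 i)).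
have hw0 : forall i, w i != 0 by move=> i; rewrite /w; case: sig2_eqW.
have hwA : forall i, A *m w i = theta i *: w i by move=> i; rewrite /w; case: sig2_eqW.
have hnz : forall i j : 'I_d.+1, (i == j.+1 :> nat) -> Es i *m A *m Es j != 0.
  by move=> i j hij; apply: hnz0; apply/orP; right; rewrite eq_sym.
split.
  exact: (side hd1 hw0 hwA hE hmf.1 hmo hz hnz hbip (erefl Astar) hnadj).
pose Es' i := Es (rev_ord i); pose thetas' i := thetas (rev_ord i).
have hmo' : mutually_orthogonal_idempotents Es'.
  split => [i j|i]; last exact: hmo.2.
  by rewrite /Es' hmo.1 (inj_eq rev_ord_inj).
have hz' : forall i j : 'I_d.+1, ((i.+1 < j) || (j.+1 < i))%N -> Es' i *m A *m Es' j = 0.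
  move=> i j hij; apply: hz; move: hij; have := ltn_ord i; have := ltn_ord j.
  rewrite /=; lia.
have hnz' : forall i j : 'I_d.+1, (i == j.+1 :> nat) -> Es' i *m A *m Es' j != 0.
  move=> i j /eqP hij; apply: hnz0; apply/orP; left; apply/eqP => /=.
  have := ltn_ord i; have := ltn_ord j; lia.
have hbip' : bipartite Es' A by move=> i; exact: hbip.
have hAs : Astar = \sum_i thetas' i *: Es' i.
  by rewrite /Astar (reindex_inj rev_ord_inj).
have := side hd1 hw0 hwA hE hmf.1 hmo' hz' hnz' hbip' hAs hnadj.
rewrite -/a0 /thetas' => ->.
have -> : rev_ord ord0 = ord_max :> 'I_d.+1 by apply/val_inj; rewrite /= subn1.
have -> : rev_ord (inord 1) = inord d.-1 :> 'I_d.+1.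
  by apply/val_inj; rewrite /= !inordK //; [lia | lia].
by [].
Qed.
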